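(* Fix $q>0$, $R_B>0$ and $\mathbf{w}\in\mathbb{R}^n_{++}$ with $W=\sum_b w_b$. Let $\Pi\in(0,W)$. Write $$P_{\max}=\frac{W qR_B}{W-\Pi},\qquad g(P)=\frac{(qR_BW-(W-\Pi)P)^2}{2qR_B(W-\Pi)W}.$$ Then the set $\{(P,R_A)\in\mathbb{R}^2_+:\ \pi_A^*(P,R_A,R_B)=\Pi\}$ is described as follows. (a) If $\Pi<W/2$, the set consists exactly of: - the pairs $(P,R_A)$ with $P\in\big[0,\tfrac{W-2\Pi}{W-\Pi}qR_B\big)$ and $R_A=\frac{2\Pi}{W}(qR_B-P)$; together with - the pairs $(P,R_A)$ with $P\in\big[\tfrac{W-2\Pi}{W-\Pi}qR_B,\,P_{\max}\big]$ and $R_A=g(P)$. (b) If $\Pi\ge W/2$, the set consists exactly of the pairs $(P,R_A)$ with $P\in[0,P_{\max}]$ and $R_A=g(P)$. Moreover, $\pi_A^*(P,R_A,R_B)>\Pi$ for every $R_A\ge 0$ whenever $P>P_{\max}$.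
   Context: **Battlefields.** There are $n$ battlefields $\mathcal{B}=\{1,\dots,n\}$. Battlefield $b$ has value $w_b>0$, common to both players, and $W=\sum_b w_b$. **Endowments.** Player $A$ has $P\ge 0$ pre-allocated resources and $R_A\ge 0$ real-time resources. Player $B$ has $R_B>0$ real-time resources. The constant $q>0$ is the effectiveness of $B$'s resources relative to $A$'s. **Stage 1.** Player $A$ deterministically chooses a pre-allocation $\mathbf{p}\in\Delta_n(P):=\{\mathbf{p}\in\mathbb{R}^n_+:\sum_b p_b=P\}$. This choice is binding and revealed to $B$. **Stage 2.** Each player $i\in\{A,B\}$ simultaneously chooses a distribution $F_i$ over allocations $\mathbf{x}_i\in\mathbb{R}^n_+$ with $\mathbb{E}[\sum_b x_{i,b}]\le R_i$. Player $A$ wins battlefield $b$ if $x_{A,b}+p_b>q\,x_{B,b}$; otherwise $B$ wins it. The tie-breaking rule is arbitrary. $A$'s payoff is the expected total value won, and $B$'s payoff is $W$ minus this. **Equilibrium payoffs.** The stage-2 game has unique equilibrium payoffs; $A$'s is denoted $\pi_A(\mathbf{p},R_A,R_B)$. Define $$\pi_A^*(P,R_A,R_B)=\max_{\mathbf{p}\in\Delta_n(P)}\pi_A(\mathbf{p},R_A,R_B).$$ This maximum equals the following. - If $qR_B>P$ and $R_A<\dfrac{2(qR_B-P)^2}{2qR_B-P}$: $\ \pi_A^*(P,R_A,R_B)=\dfrac{W R_A}{2(qR_B-P)}$. - Otherwise: $\ \pi_A^*(P,R_A,R_B)=W\left(1-\dfrac{qR_B}{P+R_A+\sqrt{(R_A+P)^2-P^2}}\right)$.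 *)

(* Defs.v *)
From HB Require Import structures.
From mathcomp Require Import all_boot all_order all_algebra.
From mathcomp Require Import reals.
Set Implicit Arguments. Unset Strict Implicit. Unset Printing Implicit Defensive.
Import Order.TTheory GRing.Theory Num.Theory.
Local Open Scope ring_scope.

(* Player A's optimal equilibrium payoff pi_A^*(P, R_A, R_B), where W is the
   total battlefield value and q the effectiveness of B's resources. *)
Definition piA_star {R : realType} (W q RB P RA : R) : R :=
  if (P < q * RB) && (RA < 2 * (q * RB - P) ^+ 2 / (2 * q * RB - P))
  then W * RA / (2 * (q * RB - P))
  else W * (1 - q * RB / (P + RA + Num.sqrt ((RA + P) ^+ 2 - P ^+ 2))).

Definition Pmax {R : realType} (W q RB Pi : R) : R := W * q * RB / (W - Pi).

Definition gfun {R : realType} (W q RB Pi P : R) : R :=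
  (q * RB * W - (W - Pi) * P) ^+ 2 / (2 * q * RB * (W - Pi) * W).

(* Main.v *)
Require Import Defs.
From HB Require Import structures.
From mathcomp Require Import all_boot all_order all_algebra.
From mathcomp Require Import reals.
From mathcomp Require Import ring lra.
Import Order.TTheory GRing.Theory Num.Theory.
Local Open Scope ring_scope.




Lemma sq_lemma (R : realType) (M P RA : R) : 0 < M -> 0 <= P -> 0 <= RA ->
  P + RA + Num.sqrt ((RA + P) ^+ 2 - P ^+ 2) = M <->
  P <= M /\ RA = (M - P) ^+ 2 / (2 * M).
Proof.
move=> hM hP hRA; have hA : 0 <= (RA + P) ^+ 2 - P ^+ 2 by nra.
split.
- move=> e.
  have s0 := sqrtr_ge0 ((RA + P) ^+ 2 - P ^+ 2).
  have s2 := sqr_sqrtr hA.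
  set s := Num.sqrt _ in e s0 s2.
  have es : s = M - P - RA by lra.
  rewrite es in s2.
  split; first lra.
  have h : RA * (2 * M) = (M - P) ^+ 2 by nra.
  rewrite -h; field; lra.
- move=> [hPM eRA].
  have h : RA * (2 * M) = (M - P) ^+ 2 by rewrite eRA; field; lra.
  have e1 : (RA + P) ^+ 2 - P ^+ 2 = (M - P - RA) ^+ 2 by nra.
  have e2 : 0 <= M - P - RA.
    have : 0 <= (M - P - RA) * (2 * M) by nra.
    rewrite pmulr_lge0 //; lra.
  rewrite e1 sqrtr_sqr ger0_norm //; lra.
Qed.

Lemma pi2_lemma (R : realType) (W Q Pi S : R) : 0 < Q -> 0 < Pi -> Pi < W -> 0 < S ->
  W * (1 - Q / S) = Pi <-> S = W * Q / (W - Pi).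
Proof.
move=> hQ hPi hW hS; split.
- move=> e.
  have e1 : W * (1 - Q / S) * S = W * S - W * Q by field; lra.
  rewrite e in e1.
  have e2 : S * (W - Pi) = W * Q by lra.
  rewrite -e2; field; lra.
- move=> ->; field; apply/and3P; split; lra.
Qed.

Lemma core (R : realType) (W Q Pi P RA : R) : 0 < Q -> 0 < Pi -> Pi < W -> 0 <= P -> 0 <= RA ->
 ((if (P < Q) && (RA < 2 * (Q - P) ^+ 2 / (2 * Q - P)) then W * RA / (2 * (Q - P))
   else W * (1 - Q / (P + RA + Num.sqrt ((RA + P) ^+ 2 - P ^+ 2)))) = Pi <->
  ((P < 2 * Q - W * Q / (W - Pi) /\ RA = 2 * Pi / W * (Q - P)) \/
   (2 * Q - W * Q / (W - Pi) <= P /\ P <= W * Q / (W - Pi) /\ RA = (W * Q / (W - Pi) - P) ^+ 2 / (2 * (W * Q / (W - Pi)))))).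
Proof.
move=> hQ hPi hPiW hP hRA.
have hW : 0 < W by lra.
have hWP : 0 < W - Pi by lra.
have hMQ : Q < W * Q / (W - Pi).
  have e : W * Q / (W - Pi) - Q = Q * Pi / (W - Pi) by field; lra.
  have : 0 < Q * Pi / (W - Pi) by apply: divr_gt0 => //; apply: mulr_gt0.
  lra.
set M := W * Q / (W - Pi) in hMQ *.
have eM : M = W * Q / (W - Pi) by [].
clearbody M.
have hM : 0 < M by lra.
have Llin : P < Q -> (2 * Pi / W * (Q - P) < 2 * (Q - P) ^+ 2 / (2 * Q - P)) = (P < 2 * Q - M).
  move=> hPQ.
  have e : 2 * Pi / W * (Q - P) - 2 * (Q - P) ^+ 2 / (2 * Q - P) =
     (2 * (Q - P) * (W - Pi) / (W * (2 * Q - P))) * (P - (2 * Q - M)).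
    rewrite eM; field; apply/and3P; split; lra.
  have c : 0 < 2 * (Q - P) * (W - Pi) / (W * (2 * Q - P)).
    apply: divr_gt0; first by apply: mulr_gt0 => //; lra.
    apply: mulr_gt0 => //; lra.
  by rewrite -subr_lt0 e pmulr_rlt0 // subr_lt0.
have G : P < Q -> (2 * (Q - P) ^+ 2 / (2 * Q - P) <= (M - P) ^+ 2 / (2 * M)) = (2 * Q - M <= P).
  move=> hPQ.
  have e : (M - P) ^+ 2 / (2 * M) - 2 * (Q - P) ^+ 2 / (2 * Q - P) =
     (P - (2 * Q - M)) * ((- (P ^+ 2 + M * P - 2 * M * Q)) / (2 * M * (2 * Q - P))).
    field; apply/andP; split; lra.
  have c : 0 < (- (P ^+ 2 + M * P - 2 * M * Q)) / (2 * M * (2 * Q - P)).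
    apply: divr_gt0; first nra.
    apply: mulr_gt0; lra.
  by rewrite -subr_ge0 e pmulr_lge0 // subr_ge0.
case: ifP => hC.
- move/andP: hC => [hPQ hRAh]; split.
  + move=> e; left.
    have eRA : RA = 2 * Pi / W * (Q - P).
      transitivity (W * RA / (2 * (Q - P)) * (2 * (Q - P)) / W).
        field; apply/andP; split; lra.
      rewrite e; field; lra.
    split => //; rewrite -Llin // -eRA //.
  + case => [[hP0 ->] | [hP0 [hPM eRA]]].
      field; apply/andP; split; lra.
    by move: hRAh; rewrite eRA ltNge G // hP0.
- have hS : 0 < P + RA + Num.sqrt ((RA + P) ^+ 2 - P ^+ 2).
    have s0 := sqrtr_ge0 ((RA + P) ^+ 2 - P ^+ 2).
    case: (ltP P Q) hC => hPQ /= hC; last lra.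
    have : 0 < 2 * (Q - P) ^+ 2 / (2 * Q - P).
      apply: divr_gt0; last lra.
      by apply: mulr_gt0 => //; apply: exprn_gt0; lra.
    move: hC; rewrite ltNge => /negbFE; lra.
  rewrite pi2_lemma // -eM sq_lemma //; split.
  + move=> [hPM eRA]; right; split; last by [].
    rewrite leNgt; apply/negP => hlt.
    have hPQ : P < Q by lra.
    move: hC; rewrite hPQ /= eRA ltNge G // leNgt hlt.
    done.
  + case => [[hP0 eRA] | [hP0 [hPM eRA]]]; last by [].
    have hPQ : P < Q by lra.
    by move: hC; rewrite hPQ /= eRA Llin // hP0.
Qed.


Lemma main_iff (R : realType) (W q RB Pi P RA : R) : 0 < q -> 0 < RB -> 0 < Pi -> Pi < W ->
  0 <= P -> 0 <= RA ->
      (piA_star W q RB P RA = Pi <->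
        ((P < (W - 2 * Pi) / (W - Pi) * q * RB /\ RA = 2 * Pi / W * (q * RB - P))
         \/ ((W - 2 * Pi) / (W - Pi) * q * RB <= P /\ P <= Pmax W q RB Pi
             /\ RA = gfun W q RB Pi P))).
Proof.
move=> hq hRB hPi hPiW hP hRA.
have hQ : 0 < q * RB by apply: mulr_gt0.
have e1 : (W - 2 * Pi) / (W - Pi) * q * RB = 2 * (q * RB) - W * (q * RB) / (W - Pi).
  field; lra.
have e2 : Pmax W q RB Pi = W * (q * RB) / (W - Pi) by rewrite /Pmax mulrA.
have e3 : gfun W q RB Pi P = (W * (q * RB) / (W - Pi) - P) ^+ 2 / (2 * (W * (q * RB) / (W - Pi))).
  rewrite /gfun; field; apply/and4P; split; try lra; apply/eqP; lra.
rewrite e1 e2 e3 /piA_star -[2 * q * RB]mulrA.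
exact: core.
Qed.

Theorem theorem2 (R : realType) (n : nat) (w : 'I_n -> R) (q RB Pi : R) :
  0 < q -> 0 < RB -> (forall b, 0 < w b) ->
  let W := \sum_(b < n) w b in
  0 < Pi -> Pi < W ->
  (* (a) *)
  (Pi < W / 2 ->
    forall P RA : R, 0 <= P -> 0 <= RA ->
      (piA_star W q RB P RA = Pi <->
        ((P < (W - 2 * Pi) / (W - Pi) * q * RB /\ RA = 2 * Pi / W * (q * RB - P))
         \/ ((W - 2 * Pi) / (W - Pi) * q * RB <= P /\ P <= Pmax W q RB Pi
             /\ RA = gfun W q RB Pi P)))) /\
  (* (b) *)
  (W / 2 <= Pi ->
    forall P RA : R, 0 <= P -> 0 <= RA ->
      (piA_star W q RB P RA = Pi <->
        (P <= Pmax W q RB Pi /\ RA = gfun W q RB Pi P))) /\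
  (* moreover *)
  (forall P RA : R, Pmax W q RB Pi < P -> 0 <= RA -> Pi < piA_star W q RB P RA).
Proof.
Proof.
move=> hq hRB hw W hPi hPiW; clearbody W.
have hQ : 0 < q * RB by apply: mulr_gt0.
split; [|split].
- by move=> _ P RA hP hRA; apply: main_iff.
- move=> hb P RA hP hRA; rewrite main_iff //.
  have h0 : (W - 2 * Pi) / (W - Pi) * q * RB <= 0.
    rewrite -mulrA; apply: mulr_le0_ge0; last by apply: ltW.
    apply: mulr_le0_ge0; first lra.
    rewrite invr_ge0; lra.
  split.
  + case => [[h _] | [_ [h1 h2]]]; [lra | by split].
  + move=> [h1 h2]; right; split; [lra | by split].
- move=> P RA hP hRA.
  have eM : Pmax W q RB Pi = W * (q * RB) / (W - Pi) by rewrite /Pmax mulrA.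
  have hM : q * RB < Pmax W q RB Pi.
    rewrite eM.
    have e : W * (q * RB) / (W - Pi) - q * RB = q * RB * Pi / (W - Pi) by field; lra.
    have : 0 < q * RB * Pi / (W - Pi) by apply: divr_gt0; [apply: mulr_gt0 | lra].
    lra.
  rewrite /piA_star.
  have -> : (P < q * RB) = false by apply/negbTE; rewrite -leNgt; lra.
  rewrite /=.
  have s0 := sqrtr_ge0 ((RA + P) ^+ 2 - P ^+ 2).
  set S := P + RA + _.
  have hS : Pmax W q RB Pi < S by rewrite /S; lra.
  have hS0 : 0 < S by lra.
  have e : W * (1 - q * RB / S) - Pi = ((W - Pi) * S - W * (q * RB)) / S.
    field; lra.
  have e4 : (W - Pi) * Pmax W q RB Pi = W * (q * RB) by rewrite eM; field; lra.
  have : 0 < ((W - Pi) * S - W * (q * RB)) / S.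
    apply: divr_gt0 => //; nra.
  lra.
Qed.
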